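(* Let $S=\{l_1=w_1,\dots,l_m=w_m\}$ with $l_1,\dots,l_m$ literals and $w_1,\dots,w_m\ge 0$ reals, and let $N$ be a real. Then $[N\le S]$ is strongly equivalent to the aggregate $sum\langle S\rangle\ge N$, and $[S\le N]$ is strongly equivalent to the aggregate $sum\langle S\rangle\le N$.
   Context: A literal is an atom $a$ or $\neg a$. Formulas with aggregates: atoms and $\bot$; combinations by $\wedge,\vee,\to$ ($\neg F:=F\to\bot$, $\top:=\bot\to\bot$; empty conjunction $\top$, empty disjunction $\bot$); and aggregates $op\langle\{F_1=w_1,\dots,F_n=w_n\}\rangle\prec N$; here $op=sum$. $X$ satisfies the aggregate iff $op(W_X)\prec N$, $W_X$ the multiset of $w_i$ with $X\models F_i$. Reduct: $\bot^X=\bot$; $a^X=a$ if $a\in X$, else $\bot$; $(F\otimes G)^X=F^X\otimes G^X$ if $X\models F\otimes G$, else $\bot$; for an aggregate $A$, $A^X=op\langle\{F_1^X=w_1,\dots\}\rangle\prec N$ if $X\models A$, else $\bot$. $X$ is a stable model of a theory $\Gamma$ if $X\models\Gamma^X$ and no proper subset of $X$ satisfies $\Gamma^X$; two formulas are strongly equivalent if adding either to any theory gives the same stable models. The translations of weight constraints into nested expressions are $$[N\le S]=\bigvee_{I\subseteq\{1,\dots,m\}:\,N\le\sum_{i\in I}w_i}\ \bigwedge_{i\in I}l_i,\qquad [S\le N]=\neg\bigvee_{I\subseteq\{1,\dots,m\}:\,N<\sum_{i\in I}w_i}\ \bigwedge_{i\in I}l_i.$$ *)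

(* Defs.v *)
From Stdlib Require Import Reals List.
Import ListNotations.
Open Scope R_scope.
Set Implicit Arguments.

Inductive cmp := CLt | CLe | CEq | CNe | CGe | CGt.

Definition cmpb (c : cmp) (x y : R) : bool :=
  match c with
  | CLt => if Rlt_dec x y then true else false
  | CLe => if Rle_dec x y then true else false
  | CEq => if Req_EM_T x y then true else false
  | CNe => if Req_EM_T x y then false else true
  | CGe => if Rge_dec x y then true else false
  | CGt => if Rgt_dec x y then true else false
  end.

Inductive form (A : Type) : Type :=
| FAtom : A -> form A
| FBot : form A
| FAnd : form A -> form A -> form A
| FOr : form A -> form A -> form A
| FImp : form A -> form A -> form A
| FSum : list (form A * R) -> cmp -> R -> form A.  (* sum<{F1=w1,..}> prec N *)

Arguments FBot {A}.

Definition FNot {A} (F : form A) : form A := FImp F FBot.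
Definition FTop {A} : form A := FImp FBot FBot.

Definition interp (A : Type) := A -> bool.

Fixpoint sat {A} (X : interp A) (F : form A) : bool :=
  match F with
  | FAtom a => X a
  | FBot => false
  | FAnd F G => sat X F && sat X G
  | FOr F G => sat X F || sat X G
  | FImp F G => negb (sat X F) || sat X G
  | FSum l c N =>
      cmpb c ((fix sumw (l : list (form A * R)) : R :=
                 match l with
                 | [] => 0
                 | (G, w) :: t => (if sat X G then w else 0) + sumw t
                 end) l) N
  end.

Fixpoint reduct {A} (X : interp A) (F : form A) : form A :=
  match F with
  | FAtom a => if X a then FAtom a else FBot
  | FBot => FBot
  | FAnd F1 F2 => if sat X (FAnd F1 F2) then FAnd (reduct X F1) (reduct X F2) else FBot
  | FOr F1 F2 => if sat X (FOr F1 F2) then FOr (reduct X F1) (reduct X F2) else FBot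
  | FImp F1 F2 => if sat X (FImp F1 F2) then FImp (reduct X F1) (reduct X F2) else FBot
  | FSum l c N =>
      if sat X (FSum l c N)
      then FSum ((fix redl (l : list (form A * R)) : list (form A * R) :=
                    match l with
                    | [] => []
                    | (G, w) :: t => (reduct X G, w) :: redl t
                    end) l) c N
      else FBot
  end.

Definition theory (A : Type) := form A -> Prop.

Definition sat_th {A} (Y : interp A) (T : theory A) : Prop :=
  forall F, T F -> sat Y F = true.

Definition reduct_th {A} (X : interp A) (T : theory A) : theory A :=
  fun G => exists F, T F /\ G = reduct X F.

Definition proper_subset {A} (Y X : interp A) : Prop :=
  (forall a, Y a = true -> X a = true) /\ (exists a, X a = true /\ Y a = false).

Definition stable_model {A} (T : theory A) (X : interp A) : Prop :=
  sat_th X (reduct_th X T) /\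
  forall Y, proper_subset Y X -> ~ sat_th Y (reduct_th X T).

Definition add_form {A} (T : theory A) (F : form A) : theory A :=
  fun G => T G \/ G = F.

Definition strongly_equivalent {A} (F G : form A) : Prop :=
  forall (T : theory A) (X : interp A),
    stable_model (add_form T F) X <-> stable_model (add_form T G) X.

Inductive literal (A : Type) := Pos : A -> literal A | Neg : A -> literal A.

Definition lit_form {A} (l : literal A) : form A :=
  match l with Pos a => FAtom a | Neg a => FNot (FAtom a) end.

Definition wlist (A : Type) := list (literal A * R).

(* All sub-multisets, i.e. sublists indexed by subsets I of {1..m}. *)
Fixpoint sublists {T} (s : list T) : list (list T) :=
  match s with
  | [] => [[]]
  | x :: t => map (cons x) (sublists t) ++ sublists t
  end.

Definition sumw {A} (I : wlist A) : R := fold_right (fun p acc => snd p + acc) 0 I.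

Definition bigAnd {A} (l : list (form A)) : form A := fold_right (@FAnd A) FTop l.
Definition bigOr {A} (l : list (form A)) : form A := fold_right (@FOr A) FBot l.

Definition conj_of {A} (I : wlist A) : form A := bigAnd (map (fun p => lit_form (fst p)) I).

Definition wc_lower {A} (N : R) (S : wlist A) : form A :=
  bigOr (map conj_of
    (filter (fun I => if Rle_dec N (sumw I) then true else false) (sublists S))).

Definition wc_upper {A} (S : wlist A) (N : R) : form A :=
  FNot (bigOr (map conj_of
    (filter (fun I => if Rlt_dec N (sumw I) then true else false) (sublists S)))).

Definition sum_agg {A} (S : wlist A) (c : cmp) (N : R) : form A :=
  FSum (map (fun p => (lit_form (fst p), snd p)) S) c N.

(* Main.v *)
Require Import Defs.
From Stdlib Require Import Reals List Lra Bool.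
Import ListNotations.
Open Scope R_scope.

Definition litval {A} (Y X : interp A) (l : literal A) : bool :=
  match l with Pos a => Y a | Neg a => negb (X a) end.

Definition subi {A} (Y X : interp A) := forall a, Y a = true -> X a = true.

Definition wsum {A} (g : literal A * R -> bool) (S : wlist A) : R :=
  fold_right (fun p acc => (if g p then snd p else 0) + acc) 0 S.

Fixpoint sumf {A} (Y : interp A) (l : list (form A * R)) : R :=
  match l with [] => 0 | (G, w) :: t => (if sat Y G then w else 0) + sumf Y t end.

Fixpoint redl {A} (X : interp A) (l : list (form A * R)) : list (form A * R) :=
  match l with [] => [] | (G, w) :: t => (reduct X G, w) :: redl X t end.

Lemma sat_FSum {A} (Y : interp A) l c N : sat Y (FSum l c N) = cmpb c (sumf Y l) N.
Proof. simpl. f_equal. induction l as [|[G w] t IH]; simpl; auto. rewrite IH. auto. Qed.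

Lemma reduct_FSum {A} (X : interp A) l c N :
  reduct X (FSum l c N) = if sat X (FSum l c N) then FSum (redl X l) c N else FBot.
Proof. simpl. destruct (cmpb _ _ _); auto. f_equal.
  induction l as [|[G w] t IH]; simpl; auto. rewrite IH. auto. Qed.

Lemma red_mono {A} (Y X : interp A) F : subi Y X -> sat Y (reduct X F) = true -> sat X F = true.
Proof.
  intros H. destruct F; simpl.
  - destruct (X a) eqn:E; simpl; auto.
  - discriminate.
  - destruct (sat X F1 && sat X F2); simpl; auto; discriminate.
  - destruct (sat X F1 || sat X F2); simpl; auto; discriminate.
  - destruct (negb (sat X F1) || sat X F2); simpl; auto; discriminate.
  - match goal with |- context [if ?b then _ else _] => destruct b end; auto; discriminate.
Qed.

Lemma red_false {A} (Y X : interp A) F : subi Y X -> sat X F = false -> sat Y (reduct X F) = false.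
Proof.
  intros H E. destruct (sat Y (reduct X F)) eqn:E2; auto.
  apply red_mono in E2; auto; congruence.
Qed.

Lemma red_and {A} (Y X : interp A) F G : subi Y X ->
  sat Y (reduct X (FAnd F G)) = sat Y (reduct X F) && sat Y (reduct X G).
Proof.
  intros H. simpl.
  destruct (sat X F) eqn:EF; destruct (sat X G) eqn:EG; simpl; auto;
  repeat rewrite (red_false Y X F H EF); repeat rewrite (red_false Y X G H EG);
  auto using andb_false_r.
Qed.

Lemma red_or {A} (Y X : interp A) F G : subi Y X ->
  sat Y (reduct X (FOr F G)) = sat Y (reduct X F) || sat Y (reduct X G).
Proof.
  intros H. simpl.
  destruct (sat X F) eqn:EF; destruct (sat X G) eqn:EG; simpl; auto;
  repeat rewrite (red_false Y X F H EF); repeat rewrite (red_false Y X G H EG);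
  auto using orb_false_r.
Qed.

Lemma red_bigOr {A} (Y X : interp A) l : subi Y X ->
  sat Y (reduct X (bigOr l)) = existsb (fun F => sat Y (reduct X F)) l.
Proof.
  intros H. induction l as [|a l IH]; [reflexivity|].
  change (bigOr (a :: l)) with (FOr a (bigOr l)). rewrite red_or, IH; auto.
Qed.

Lemma sat_bigOr {A} (X : interp A) l : sat X (bigOr l) = existsb (sat X) l.
Proof.
  induction l as [|a l IH]; [reflexivity|].
  change (bigOr (a :: l)) with (FOr a (bigOr l)). simpl. rewrite IH; auto.
Qed.

Lemma red_lit {A} (Y X : interp A) l : subi Y X -> sat Y (reduct X (lit_form l)) = litval Y X l.
Proof.
  intros H. destruct l as [a|a]; simpl.
  - destruct (X a) eqn:E; simpl; auto.
    destruct (Y a) eqn:E2; auto. apply H in E2; congruence.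
  - destruct (X a); reflexivity.
Qed.

Lemma sat_lit {A} (X : interp A) l : sat X (lit_form l) = litval X X l.
Proof. destruct l; simpl; auto using orb_false_r. Qed.

Lemma red_conj {A} (Y X : interp A) I : subi Y X ->
  sat Y (reduct X (conj_of I)) = forallb (fun p => litval Y X (fst p)) I.
Proof.
  intros H. induction I as [|p I IH]; [reflexivity|].
  change (conj_of (p :: I)) with (FAnd (lit_form (fst p)) (conj_of I)).
  rewrite red_and, red_lit, IH; auto.
Qed.

Lemma sat_conj {A} (X : interp A) I :
  sat X (conj_of I) = forallb (fun p => litval X X (fst p)) I.
Proof.
  induction I as [|p I IH]; [reflexivity|].
  change (conj_of (p :: I)) with (FAnd (lit_form (fst p)) (conj_of I)).
  simpl. rewrite sat_lit, IH; auto.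
Qed.

Lemma sumf_red {A} (Y X : interp A) S : subi Y X ->
  sumf Y (redl X (map (fun p => (lit_form (fst p), snd p)) S)) = wsum (fun p => litval Y X (fst p)) S.
Proof.
  intros H. induction S as [|p S IH]; [reflexivity|].
  simpl. rewrite red_lit, IH; auto.
Qed.

Lemma sumf_sat {A} (X : interp A) S :
  sumf X (map (fun p => (lit_form (fst p), snd p)) S) = wsum (fun p => litval X X (fst p)) S.
Proof.
  induction S as [|p S IH]; [reflexivity|].
  simpl. rewrite sat_lit, IH; auto.
Qed.

Lemma agg_sat {A} (X : interp A) S c N :
  sat X (sum_agg S c N) = cmpb c (wsum (fun p => litval X X (fst p)) S) N.
Proof. unfold sum_agg. rewrite sat_FSum, sumf_sat. reflexivity. Qed.

Lemma agg_red {A} (Y X : interp A) S c N : subi Y X ->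
  sat Y (reduct X (sum_agg S c N)) =
  sat X (sum_agg S c N) && cmpb c (wsum (fun p => litval Y X (fst p)) S) N.
Proof.
  intros H. unfold sum_agg at 1. rewrite reduct_FSum.
  fold (sum_agg S c N).
  destruct (sat X (sum_agg S c N)); [|reflexivity].
  rewrite sat_FSum, sumf_red; auto.
Qed.

Lemma wsum_mono {A} (g1 g2 : literal A * R -> bool) S :
  (forall p, In p S -> 0 <= snd p) -> (forall p, g1 p = true -> g2 p = true) ->
  wsum g1 S <= wsum g2 S.
Proof.
  intros Hw Hg. induction S as [|p S IH]; simpl; [lra|].
  assert (0 <= snd p) by (apply Hw; left; auto).
  assert (wsum g1 S <= wsum g2 S) by (apply IH; intros; apply Hw; right; auto).
  destruct (g1 p) eqn:E1; [rewrite (Hg p E1)|destruct (g2 p)]; lra.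
Qed.

Lemma wsum_nonneg {A} (g : literal A * R -> bool) S :
  (forall p, In p S -> 0 <= snd p) -> 0 <= wsum g S.
Proof.
  intros Hw. induction S as [|p S IH]; simpl; [lra|].
  assert (0 <= snd p) by (apply Hw; left; auto).
  assert (0 <= wsum g S) by (apply IH; intros; apply Hw; right; auto).
  destruct (g p); lra.
Qed.

Lemma sub_le {A} (g : literal A * R -> bool) S :
  (forall p, In p S -> 0 <= snd p) ->
  forall I, In I (sublists S) -> forallb g I = true -> sumw I <= wsum g S.
Proof.
  intros Hw. induction S as [|x t IH]; intros I HI Hg.
  - simpl in HI. destruct HI as [<-|[]]. simpl. lra.
  - assert (0 <= snd x) by (apply Hw; left; auto).
    assert (IH' := IH (fun p Hp => Hw p (or_intror Hp))).
    simpl in HI. apply in_app_or in HI. destruct HI as [HI|HI].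
    + apply in_map_iff in HI. destruct HI as [I' [<- HI']].
      simpl in Hg. apply andb_true_iff in Hg. destruct Hg as [Hx HI''].
      simpl. rewrite Hx. specialize (IH' I' HI' HI''). unfold sumw in *. simpl. lra.
    + specialize (IH' I HI Hg). simpl. destruct (g x); lra.
Qed.

Lemma filter_sub {A} (g : literal A * R -> bool) S :
  In (filter g S) (sublists S) /\ forallb g (filter g S) = true /\ sumw (filter g S) = wsum g S.
Proof.
  induction S as [|x t [H1 [H2 H3]]]; simpl.
  - split; [left; auto|]. split; auto.
  - destruct (g x) eqn:E.
    + split; [apply in_or_app; left; apply in_map; auto|].
      simpl. rewrite E, H2. split; auto. unfold sumw in *. simpl. rewrite H3. auto.
    + split; [apply in_or_app; right; auto|]. split; auto. rewrite H3. lra.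
Qed.

Lemma litval_mono {A} (Y X : interp A) : subi Y X ->
  forall p : literal A * R, litval Y X (fst p) = true -> litval X X (fst p) = true.
Proof. intros H [[a|a] w]; simpl; auto. Qed.

Lemma se_dir {A} (F G : form A) :
  (forall X Y, subi Y X -> sat Y (reduct X F) = sat Y (reduct X G)) ->
  forall T X, stable_model (add_form T F) X -> stable_model (add_form T G) X.
Proof.
  intros H T X [H1 H2]. split.
  - intros F' [F0 [[HT|HE] ->]].
    + apply H1. exists F0. split; [left|]; auto.
    + subst F0. rewrite <- (H X X (fun a h => h)). apply H1. exists F. split; [right|]; auto.
  - intros Y HY Hsat. apply (H2 Y HY). intros F' [F0 [[HT|HE] ->]].
    + apply Hsat. exists F0. split; [left|]; auto.
    + subst F0. rewrite (H X Y (proj1 HY)). apply Hsat. exists G. split; [right|]; auto.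
Qed.

Lemma se_of {A} (F G : form A) :
  (forall X Y, subi Y X -> sat Y (reduct X F) = sat Y (reduct X G)) ->
  strongly_equivalent F G.
Proof.
  intros H T X. split; apply se_dir; auto.
  intros; symmetry; auto.
Qed.

Theorem proposition17 (A : Type) (S : wlist A) (N : R)
  (Hw : forall p, In p S -> 0 <= snd p) :
  strongly_equivalent (wc_lower N S) (sum_agg S CGe N) /\
  strongly_equivalent (wc_upper S N) (sum_agg S CLe N).
Proof.
  split; apply se_of; intros X Y HYX;
  assert (Hm := wsum_mono _ _ S Hw (litval_mono Y X HYX));
  rewrite agg_red, agg_sat by auto.
  - unfold wc_lower. rewrite red_bigOr by auto.
    apply eq_iff_eq_true. split; intro Hx.
    + apply existsb_exists in Hx. destruct Hx as [F [HF HFs]].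
      apply in_map_iff in HF. destruct HF as [I [<- HI]].
      apply filter_In in HI. destruct HI as [HI HN].
      rewrite red_conj in HFs by auto.
      destruct (Rle_dec N (sumw I)) as [HN'|]; [|discriminate].
      assert (Hl := sub_le _ S Hw I HI HFs).
      simpl. destruct (Rge_dec _ N); [|lra]. destruct (Rge_dec _ N); [|lra]. auto.
    + apply andb_true_iff in Hx. destruct Hx as [_ Hx]. simpl in Hx.
      destruct (Rge_dec _ N) as [Hge|]; [|discriminate].
      apply existsb_exists.
      destruct (filter_sub (fun p => litval Y X (fst p)) S) as [F1 [F2 F3]].
      exists (conj_of (filter (fun p => litval Y X (fst p)) S)). split.
      * apply in_map. apply filter_In. split; auto.
        destruct (Rle_dec N _); auto; lra.
      * rewrite red_conj; auto.
  - unfold wc_upper, FNot.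
    assert (Hn : sat Y (reduct X (FImp (bigOr (map conj_of (filter (fun I => if Rlt_dec N (sumw I) then true else false) (sublists S)))) FBot))
       = negb (sat X (bigOr (map conj_of (filter (fun I => if Rlt_dec N (sumw I) then true else false) (sublists S)))))).
    { simpl. match goal with |- context [sat X ?D] => destruct (sat X D) eqn:E end;
      simpl; auto. rewrite red_false; auto. }
    rewrite Hn, sat_bigOr. clear Hn.
    destruct (existsb _ _) eqn:E; simpl.
    + apply existsb_exists in E. destruct E as [F [HF HFs]].
      apply in_map_iff in HF. destruct HF as [I [<- HI]].
      apply filter_In in HI. destruct HI as [HI HN].
      rewrite sat_conj in HFs.
      destruct (Rlt_dec N (sumw I)) as [HN'|]; [|discriminate].
      assert (Hl := sub_le _ S Hw I HI HFs).
      destruct (Rle_dec _ N); [lra|]. auto.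
    + destruct (filter_sub (fun p => litval X X (fst p)) S) as [F1 [F2 F3]].
      destruct (Rle_dec (wsum (fun p => litval X X (fst p)) S) N) as [Hle|Hgt].
      * destruct (Rle_dec _ N); auto. lra.
      * exfalso. assert (Ht : existsb (sat X) (map conj_of (filter (fun I => if Rlt_dec N (sumw I) then true else false) (sublists S))) = true).
        { apply existsb_exists. exists (conj_of (filter (fun p => litval X X (fst p)) S)). split.
          - apply in_map. apply filter_In. split; auto. destruct (Rlt_dec N _); auto; lra.
          - rewrite sat_conj; auto. }
        congruence.
Qed.
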